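(* Let $\Omega\subset\mathbb{R}^N$ be a bounded domain with $C^{2,\alpha}$ boundary, $\alpha\in(0,1)$, let $a,c\in C^{0,\alpha}(\overline\Omega)$ with $a>0$ and $c>0$ on $\overline\Omega$, and let $\varepsilon\in(0,1)$. Then the problem $$-\Delta u+c(x)\,(u+\varepsilon)^{-1}|\nabla u|^2=a(x)\ \text{ in }\Omega,\qquad u>0\ \text{ in }\Omega,\qquad u=0\ \text{ on }\partial\Omega$$ has at most one solution $u\in C^{2,\alpha}(\overline\Omega)$. *)

(* Defs.v *)
From mathcomp Require Import all_boot.
From Stdlib Require Import Reals.
Set Implicit Arguments. Unset Strict Implicit. Unset Printing Implicit Defensive.
Open Scope R_scope.

Definition pt (N : nat) := 'I_N -> R.

Definition rdist (N : nat) (x y : pt N) : R :=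
  sqrt (\big[Rplus/0]_(i < N) ((x i - y i) * (x i - y i))).
Definition rball (N : nat) (p : pt N) (r : R) (x : pt N) : Prop := rdist p x < r.

Definition is_open (N : nat) (S : pt N -> Prop) : Prop :=
  forall x, S x -> exists r, 0 < r /\ forall y, rball x r y -> S y.

Definition is_connected (N : nat) (S : pt N -> Prop) : Prop :=
  forall U V : pt N -> Prop, is_open U -> is_open V ->
    (forall x, S x -> U x \/ V x) ->
    (forall x, ~ (S x /\ U x /\ V x)) ->
    (forall x, S x -> U x) \/ (forall x, S x -> V x).

Definition is_bounded (N : nat) (S : pt N -> Prop) : Prop :=
  exists M, forall x, S x -> rdist (fun _ => 0) x <= M.

Definition is_domain (N : nat) (S : pt N -> Prop) : Prop :=
  is_open S /\ (exists x, S x) /\ is_connected S.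

Definition rclosure (N : nat) (S : pt N -> Prop) (x : pt N) : Prop :=
  forall r, 0 < r -> exists y, S y /\ rball x r y.
Definition rboundary (N : nat) (S : pt N -> Prop) (x : pt N) : Prop :=
  rclosure S x /\ ~ S x.

Definition shift (N : nat) (x : pt N) (i : 'I_N) (t : R) : pt N :=
  fun j => if j == i then x j + t else x j.

Definition partial_at (N : nat) (f : pt N -> R) (i : 'I_N) (x : pt N) (l : R) : Prop :=
  derivable_pt_lim (fun t => f (shift x i t)) 0 l.

Definition holder_on (N : nat) (S : pt N -> Prop) (alpha : R) (f : pt N -> R) : Prop :=
  exists C, forall x y, S x -> S y -> Rabs (f x - f y) <= C * Rpower (rdist x y) alpha.

(* f in C^{2,alpha} on the open set S: first and second partial derivatives exist
   in S and f, Df, D^2 f are uniformly alpha-Hoelder on S (hence extend to the rclosure). *)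
Definition C2alpha_with (N : nat) (S : pt N -> Prop) (alpha : R) (f : pt N -> R)
  (Df : 'I_N -> pt N -> R) (D2f : 'I_N -> 'I_N -> pt N -> R) : Prop :=
  (forall i x, S x -> partial_at f i x (Df i x)) /\
  (forall i j x, S x -> partial_at (Df j) i x (D2f i j x)) /\
  holder_on S alpha f /\
  (forall i, holder_on S alpha (Df i)) /\
  (forall i j, holder_on S alpha (D2f i j)).

Definition C2alpha_on (N : nat) (S : pt N -> Prop) (alpha : R) (f : pt N -> R) : Prop :=
  exists Df D2f, C2alpha_with S alpha f Df D2f.

(* C^{2,alpha} rboundary (Gilbarg-Trudinger): near each rboundary point, Omega is the
   region on one side of the graph of a C^{2,alpha} function of N-1 of the coordinates. *)
Definition C2alpha_boundary (N : nat) (Om : pt N -> Prop) (alpha : R) : Prop :=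
  forall p, rboundary Om p ->
    exists (r : R) (k : 'I_N) (s : R) (g : pt N -> R),
      0 < r /\ (s = 1 \/ s = -1) /\
      (forall x y : pt N, (forall j, j != k -> x j = y j) -> g x = g y) /\
      C2alpha_on (rball p r) alpha g /\
      (forall x, rball p r x -> (Om x <-> s * (x k - g x) > 0)).

Definition laplacian_sum (N : nat) (D2u : 'I_N -> 'I_N -> pt N -> R) (x : pt N) : R :=
  \big[Rplus/0]_(i < N) D2u i i x.
Definition grad_sq (N : nat) (Du : 'I_N -> pt N -> R) (x : pt N) : R :=
  \big[Rplus/0]_(i < N) (Du i x * Du i x).

Definition is_solution (N : nat) (Om : pt N -> Prop) (alpha eps : R)
  (a c u : pt N -> R) : Prop :=
  holder_on (rclosure Om) alpha u /\
  exists Du D2u, C2alpha_with Om alpha u Du D2u /\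
    (forall x, Om x ->
       - laplacian_sum D2u x + c x * / (u x + eps) * grad_sq Du x = a x) /\
    (forall x, Om x -> 0 < u x) /\
    (forall x, rboundary Om x -> u x = 0).

(* Main.v *)
Require Import Defs.
From mathcomp Require Import all_boot all_order all_algebra.
From Stdlib Require Import Reals Lra Psatz Classical FunctionalExtensionality.
From mathcomp Require Import all_classical all_reals all_analysis.
From mathcomp Require Import Rstruct Rstruct_topology.
Import Order.TTheory GRing.Theory Num.Theory.
Import numFieldNormedType.Exports.
Local Open Scope classical_set_scope.
Local Open Scope ring_scope.

Lemma mxballP (n : nat) (v w : 'rV[R]_n) (e : R) :
  ball v e w <-> (0 < e /\ forall i j, `|v i j - w i j| < e).
Proof. by []. Qed.

Lemma evt_bridge (N : nat) (K : pt N -> Prop) (f : pt N -> R) :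
  (exists x, K x) ->
  (exists M, forall x, K x -> forall i, Rabs (x i) <= M)%coqR ->
  (forall x, (forall r, 0 < r -> exists y, K y /\ forall i, Rabs (x i - y i) < r)%coqR -> K x) ->
  (forall x, K x -> forall e, 0 < e -> exists d, 0 < d /\ forall y, K y ->
      (forall i, Rabs (x i - y i) < d) -> Rabs (f x - f y) < e)%coqR ->
  exists x0, K x0 /\ forall x, K x -> (f x <= f x0)%coqR.
Proof.
move=> [x Kx] [M HM] Hcl Hct.
pose A := [set v : 'rV[R]_N | K (fun i => v ord0 i)].
pose g := fun v : 'rV[R]_N => f (fun i => v ord0 i).
have rowK : forall y : pt N, (fun i => (\row_j y j) ord0 i) = y.
  by move=> y; apply: funext => i; rewrite mxE.
have [c Ac Hc] : exists2 c, c \in A & forall t, t \in A -> g t <= g c.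
  apply: EVT_max_rV.
  - by exists (\row_j x j); rewrite /A /= rowK.
  - apply: bounded_closed_compact.
    + exists (Num.max M 0); split; first by rewrite num_real.
      move=> y My v Av.
      have : ball (0 : 'rV[R]_N) y v.
        apply/mxballP; split.
          by apply: le_lt_trans My; rewrite le_max lexx orbT.
        move=> i j; rewrite (ord1 i) mxE sub0r normrN.
        apply: le_lt_trans My.
        by rewrite le_max; apply/orP; left; rewrite -RabsE; apply/RleP; exact: HM.
      rewrite mx_norm_ball /ball_ /= sub0r normrN => H.
      exact: ltW.
    + move=> v Hv; apply: Hcl => r r0.
      have r0' : 0 < r by apply/RltP.
      have [w [Aw Bw]] := Hv (ball v r) (nbhsx_ballx v r r0').
      exists (fun i => w ord0 i); split; first exact: Aw.
      move=> i; apply/RltP; rewrite RabsE.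
      by move: Bw => /mxballP [_ /(_ ord0 i)].

  - apply/subspace_continuousP => v Av.
    apply/cvgrPdist_lt => e e0.
    have [d [d0 Hd]] := Hct _ Av e (@RltP _ _ e0).
    rewrite /within; apply/nbhs_ballP; exists d; first exact/RltP.
    move=> t Bt At; rewrite -RabsE; apply/RltP; apply: Hd => //.
    move=> i; apply/RltP; rewrite RabsE.
    by move: Bt => /mxballP [_ /(_ ord0 i)].

exists (fun i => c ord0 i); split; first by move: Ac; rewrite inE.
move=> y Ky; have := Hc (\row_j y j); rewrite /g rowK => H.
apply/RleP; apply: H; rewrite inE /A /= rowK //.
Qed.
Set Implicit Arguments. Unset Strict Implicit.

Section Sums.
Variable N : nat.

Lemma sum_sq_ge0 (v : 'I_N -> R) : (0 <= \big[Rplus/0]_(j < N) (v j * v j))%coqR.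
Proof.
apply/RleP; change (0 <= \sum_(j < N) v j * v j); apply: sumr_ge0 => j _.
by rewrite -expr2 sqr_ge0.
Qed.

Lemma sum_sq_ge_term (v : 'I_N -> R) i :
  (v i * v i <= \big[Rplus/0]_(j < N) (v j * v j))%coqR.
Proof.
apply/RleP; change (v i * v i <= \sum_(j < N) v j * v j).
rewrite (bigD1 i) //= lerDl; apply: sumr_ge0 => j _.
by rewrite -expr2 sqr_ge0.
Qed.

Lemma sum_sq_le (v : 'I_N -> R) d :
  (forall j, v j * v j <= d)%coqR ->
  (\big[Rplus/0]_(j < N) (v j * v j) <= INR N * d)%coqR.
Proof.
move=> H; apply/RleP; change (\sum_(j < N) v j * v j <= INR N * d).
have -> : INR N * d = \sum_(j < N) d by rewrite sumr_const card_ord INRE mulr_natl.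
by apply: ler_sum => j _; apply/RleP; exact: H.
Qed.

Lemma sum_sq_shift (v : 'I_N -> R) i :
  (forall j, j != i -> v j = 0%coqR) ->
  (\big[Rplus/0]_(j < N) (v j * v j) = v i * v i)%coqR.
Proof.
move=> H; change (\sum_(j < N) v j * v j = v i * v i).
rewrite (bigD1 i) //= big1 ?addr0 // => j /H ->; by rewrite mulr0.
Qed.

End Sums.

Section Sums2.
Variable N : nat.
Lemma sumR_le (f g : 'I_N -> R) :
  (forall j, f j <= g j)%coqR ->
  (\big[Rplus/0]_(j < N) f j <= \big[Rplus/0]_(j < N) g j)%coqR.
Proof.
move=> H; apply/RleP; change (\sum_(j < N) f j <= \sum_(j < N) g j).
by apply: ler_sum => j _; apply/RleP.
Qed.
Lemma sumR_scale (f : 'I_N -> R) c :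
  (\big[Rplus/0]_(j < N) (f j * c) = \big[Rplus/0]_(j < N) f j * c)%coqR.
Proof.
change (\sum_(j < N) f j * c = (\sum_(j < N) f j) * c).
by rewrite mulr_suml.
Qed.
Lemma sumR_ext (f g : 'I_N -> R) :
  (forall j, f j = g j) ->
  (\big[Rplus/0]_(j < N) f j = \big[Rplus/0]_(j < N) g j)%coqR.
Proof. by move=> H; apply: eq_bigr => j _. Qed.
End Sums2.

Open Scope R_scope.

Lemma rdist_coord N (x y : pt N) i : Rabs (x i - y i) <= rdist x y.
Proof.
unfold rdist. rewrite -sqrt_Rsqr_abs. apply: sqrt_le_1_alt.
exact: (sum_sq_ge_term (fun j => x j - y j)).
Qed.

Lemma rdist_refl N (x : pt N) : rdist x x = 0.
Proof.
unfold rdist.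
have H1 := sum_sq_ge0 (fun j => x j - x j).
have H2 := @sum_sq_le N (fun j => x j - x j) 0 (fun j => ltac:(simpl; rewrite Rminus_diag; lra)).
have -> : \big[Rplus/0]_(i < N) ((x i - x i) * (x i - x i)) = 0 by simpl in *; nra.
exact: sqrt_0.
Qed.

Lemma sq_le_of_abs v d : Rabs v < d -> v * v <= d * d.
Proof. move=> /Rabs_def2 [h1 h2]; nra. Qed.

Lemma rdist_small N (x y : pt N) r : 0 < r ->
  (forall i, Rabs (x i - y i) < r / (INR N + 1)) -> rdist x y < r.
Proof.
move=> r0 H.
have hN := pos_INR N.
set d := r / (INR N + 1).
have d0 : 0 < d by unfold d; apply: Rdiv_lt_0_compat; lra.
have rd : r = d * (INR N + 1) by unfold d; field; lra.
have Hs := @sum_sq_le N (fun j => x j - y j) (d * d) (fun j => @sq_le_of_abs _ _ (H j)).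
unfold rdist. rewrite -(sqrt_Rsqr r); last lra.
apply: sqrt_lt_1_alt; split; first exact: (sum_sq_ge0 (fun j => x j - y j)).
simpl in Hs. unfold Rsqr. rewrite rd.
have dd := Rmult_lt_0_compat d d d0 d0.
have : INR N * (d * d) < (d * (INR N + 1)) * (d * (INR N + 1)) by nra.
move=> h; exact: (Rle_lt_trans _ _ _ Hs h).
Qed.

Notation dshift := Defs.shift.

Lemma rdist_shift N (x : pt N) (i : 'I_N) (t : R) : rdist x (dshift x i t) = Rabs t.
Proof.
unfold rdist.
rewrite (@sum_sq_shift N (fun j => (x j - dshift x i t j)%coqR) i).
  rewrite /Defs.shift eqxx.
  have -> : (x i - (x i + t)) * (x i - (x i + t)) = Rsqr t by unfold Rsqr; ring.
  exact: sqrt_Rsqr_abs.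
move=> j /negbTE hj; rewrite /Defs.shift hj; ring.
Qed.

Lemma shift_shift N (x : pt N) (i : 'I_N) (t s : R) : dshift (dshift x i t) i s = dshift x i (t + s).
Proof.
apply: functional_extensionality => j; rewrite /Defs.shift.
case: (j == i); ring.
Qed.

Lemma shift0 N (x : pt N) (i : 'I_N) : dshift x i 0 = x.
Proof.
apply: functional_extensionality => j; rewrite /Defs.shift.
case: (j == i); ring.
Qed.

Lemma rdist0_eq N (x y : pt N) : rdist x y = 0 -> x = y.
Proof.
move=> h; apply: functional_extensionality => j.
have := rdist_coord x y j; rewrite h => h2.
have := Rabs_pos (x j - y j).
move=> h3; case: (Req_dec (x j - y j) 0) => h5; first lra.
have := Rabs_pos_lt _ h5; lra.
Qed.

Lemma Rpower_pos x y : 0 < Rpower x y.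
Proof. rewrite /Rpower; exact: exp_pos. Qed.

Lemma holder_cont N (S : pt N -> Prop) alpha f : 0 < alpha -> holder_on S alpha f ->
  forall x, S x -> forall e, 0 < e -> exists d, 0 < d /\
    forall y, S y -> rdist x y < d -> Rabs (f x - f y) < e.
Proof.
move=> ha [C HC] x Sx e e0.
have C0 : 0 < Rabs C + 1 by have := Rabs_pos C; lra.
have eC : 0 < e / (Rabs C + 1) by apply: Rdiv_lt_0_compat.
exists (Rpower (e / (Rabs C + 1)) (/ alpha)); split; first exact: Rpower_pos.
move=> y Sy hd.
case: (Req_dec (rdist x y) 0) => h0.
  rewrite (rdist0_eq h0) Rminus_diag Rabs_R0; lra.
have hpos : 0 < rdist x y by have := sqrt_pos (\big[Rplus/0]_(i < N) ((x i - y i) * (x i - y i))); rewrite /rdist in h0 *; lra.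
have := HC x y Sx Sy.
have hp := Rlt_Rpower_l (rdist x y) _ alpha ha (conj hpos hd).
rewrite Rpower_mult Rinv_l in hp; last lra.
rewrite Rpower_1 in hp; last exact: eC.
have hq := Rpower_pos (rdist x y) alpha.
have hC : C * Rpower (rdist x y) alpha <= Rabs C * Rpower (rdist x y) alpha.
  apply: Rmult_le_compat_r; [lra | exact: RRle_abs].
have : (Rabs C + 1) * Rpower (rdist x y) alpha < (Rabs C + 1) * (e / (Rabs C + 1)).
  exact: Rmult_lt_compat_l.
have -> : (Rabs C + 1) * (e / (Rabs C + 1)) = e by field; lra.
nra.
Qed.

Definition ctsK N (K : pt N -> Prop) (f : pt N -> R) (x : pt N) :=
  forall e, 0 < e -> exists d, 0 < d /\ forall y, K y ->
      (forall i, Rabs (x i - y i) < d) -> Rabs (f x - f y) < e.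

Lemma holder_ctsK N (S : pt N -> Prop) alpha f : 0 < alpha -> holder_on S alpha f ->
  forall x, S x -> ctsK S f x.
Proof.
move=> ha hf x Sx e e0.
have [d [d0 Hd]] := holder_cont ha hf Sx e0.
have hN := pos_INR N.
exists (d / (INR N + 1)); split; first by apply: Rdiv_lt_0_compat; lra.
move=> y Sy hy; apply: Hd => //; exact: rdist_small.
Qed.

Lemma ctsK_minus N (K : pt N -> Prop) f g x : ctsK K f x -> ctsK K g x ->
  ctsK K (fun y => f y - g y) x.
Proof.
move=> hf hg e e0.
have e2 : 0 < e / 2 by lra.
have [d1 [d10 H1]] := hf _ e2; have [d2 [d20 H2]] := hg _ e2.
exists (Rmin d1 d2); split; first exact: Rmin_pos.
move=> y Ky hy.
have := H1 y Ky (fun i => Rlt_le_trans _ _ _ (hy i) (Rmin_l _ _)).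
have := H2 y Ky (fun i => Rlt_le_trans _ _ _ (hy i) (Rmin_r _ _)).
move=> a b.
have -> : f x - g x - (f y - g y) = (f x - f y) - (g x - g y) by ring.
have := Rabs_triang (f x - f y) (- (g x - g y)); rewrite Rabs_Ropp.
rewrite /Rminus in a b *; lra.
Qed.

Notation sln := Rpower.ln.

Lemma ctsK_ln N (K : pt N -> Prop) g x : K x -> (forall y, K y -> 0 < g y) -> ctsK K g x ->
  ctsK K (fun y => sln (g y)) x.
Proof.
move=> Kx gp hg e e0.
have [alp [alp0 Hl]] := ln_continue (g x) (gp x Kx) e e0.
have [d [d0 Hd]] := hg alp alp0.
exists d; split => // y Ky hy.
case: (Req_dec (g x) (g y)) => hxy.
  by rewrite hxy Rminus_diag Rabs_R0.
have := Hl (g y) (conj (conj (gp y Ky) hxy) _).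
move=> H; rewrite /Rdist in H; rewrite Rabs_minus_sym; apply: H.
rewrite /dist /= /Rdist Rabs_minus_sym; exact: Hd.
Qed.

Lemma dpl_shiftarg (F : R -> R) t l :
  derivable_pt_lim (fun s => F (t + s)) 0 l -> derivable_pt_lim F t l.
Proof.
move=> H e He; have [d Hd] := H e He; exists d => h h0 hd.
have := Hd h h0 hd; by rewrite Rplus_0_l Rplus_0_r.
Qed.

Lemma dpl_eq f x l l' : derivable_pt_lim f x l -> l = l' -> derivable_pt_lim f x l'.
Proof. by move=> H <-. Qed.

Lemma line_deriv N (f : pt N -> R) (Df : pt N -> R) (S : pt N -> Prop) x i r :
  (forall y, S y -> partial_at f i y (Df y)) ->
  (forall t, Rabs t < r -> S (dshift x i t)) ->
  forall t, Rabs t < r -> derivable_pt_lim (fun s => f (dshift x i s)) t (Df (dshift x i t)).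
Proof.
move=> Hp HS t ht; apply: dpl_shiftarg.
have := Hp _ (HS t ht); rewrite /partial_at.
have -> : (fun s => f (dshift (dshift x i t) i s)) = (fun s => f (dshift x i (t + s))).
  by apply: functional_extensionality => s; rewrite shift_shift.
done.
Qed.

Lemma one_d (H G : R -> R) r L : 0 < r ->
  (forall t, Rabs t < r -> derivable_pt_lim H t (G t)) ->
  derivable_pt_lim G 0 L ->
  (forall t, Rabs t < r -> H t <= H 0) -> G 0 = 0 /\ L <= 0.
Proof.
move=> r0 HH HG Hm.
have hr0 : Rabs 0 < r by rewrite Rabs_R0.
have G0 : G 0 = 0.
  have := @deriv_maximum H (- r) r 0 (exist _ (G 0) (HH 0 hr0)).
  rewrite /derive_pt /=; apply; try lra.
  move=> y h1 h2; apply: Hm; apply: Rabs_def1; lra.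
split => //.
apply: Rnot_lt_le => L0.
have L2 : 0 < L / 2 by lra.
have [d Hd] := HG _ L2.
have dp := cond_pos d.
pose t := Rmin (d / 2) (r / 2).
have t0 : 0 < t by apply: Rmin_pos; lra.
have td : t < d by have := Rmin_l (d / 2) (r / 2); rewrite -/t; lra.
have tr : t < r by have := Rmin_r (d / 2) (r / 2); rewrite -/t; lra.
have [c [hc [c0 ct]]] := MVT_cor2 H G 0 t t0 (fun c hc => HH c ltac:(rewrite Rabs_right; lra)).
have := Hd c ltac:(lra) ltac:(rewrite Rabs_right; lra).
rewrite Rplus_0_l G0 Rminus_0_r => hq.
have := Rabs_def2 _ _ hq => -[q1 q2].
have Gc : 0 < G c.
  have hh : G c = (G c / c) * c by field; lra.
  rewrite hh; apply: Rmult_lt_0_compat; lra.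
have := Hm t ltac:(rewrite Rabs_right; lra).
have : 0 < G c * (t - 0) by apply: Rmult_lt_0_compat; lra.
lra.
Qed.

Lemma ln_line (phi psi : R -> R) e r :
  (forall t, Rabs t < r -> 0 < phi t + e) ->
  (forall t, Rabs t < r -> derivable_pt_lim phi t (psi t)) ->
  forall t, Rabs t < r -> derivable_pt_lim (fun s => sln (phi s + e)) t (psi t / (phi t + e)).
Proof.
move=> hp hd t ht.
have h1 : derivable_pt_lim (fun s => phi s + e) t (psi t + 0).
  exact: (derivable_pt_lim_plus phi (fun _ => e) t _ _ (hd t ht) (derivable_pt_lim_const e t)).
have := derivable_pt_lim_comp (fun s => phi s + e) sln t _ _ h1 (derivable_pt_lim_ln _ (hp t ht)).
move=> h; apply: dpl_eq h _; rewrite /Rdiv; ring.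
Qed.

Lemma quot0 (phi psi : R -> R) e D1 D2 :
  derivable_pt_lim psi 0 D2 -> derivable_pt_lim phi 0 D1 -> phi 0 + e <> 0 ->
  derivable_pt_lim (fun s => psi s / (phi s + e)) 0
    ((D2 * (phi 0 + e) - D1 * psi 0) / Rsqr (phi 0 + e)).
Proof.
move=> h2 h1 hne.
have h1' : derivable_pt_lim (fun s => phi s + e) 0 (D1 + 0).
  exact: (derivable_pt_lim_plus phi (fun _ => e) 0 _ _ h1 (derivable_pt_lim_const e 0)).
have := derivable_pt_lim_div psi (fun s => phi s + e) 0 _ _ h2 h1' hne.
move=> h; apply: dpl_eq h _; rewrite Rplus_0_r; reflexivity.
Qed.

Lemma key_i (D1 D2 p1 p2 U1 U2 : R) : 0 < U1 -> 0 < U2 ->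
  p1 / U1 - p2 / U2 = 0 ->
  (D1 * U1 - p1 * p1) / Rsqr U1 - (D2 * U2 - p2 * p2) / Rsqr U2 <= 0 ->
  D1 * / U1 <= D2 * / U2 /\ p1 * p1 * / (U1 * U1) = p2 * p2 * / (U2 * U2).
Proof.
move=> h1 h2 he hl.
have q : p1 / U1 = p2 / U2 by lra.
have e1 : (D1 * U1 - p1 * p1) / Rsqr U1 = D1 * / U1 - (p1 / U1) * (p1 / U1)
  by rewrite /Rsqr; field; lra.
have e2 : (D2 * U2 - p2 * p2) / Rsqr U2 = D2 * / U2 - (p2 / U2) * (p2 / U2)
  by rewrite /Rsqr; field; lra.
have e3 : p1 * p1 * / (U1 * U1) = (p1 / U1) * (p1 / U1) by field; lra.
have e4 : p2 * p2 * / (U2 * U2) = (p2 / U2) * (p2 / U2) by field; lra.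
rewrite e1 e2 q in hl; rewrite e3 e4 q; split => //; lra.
Qed.

Lemma final_alg (L1 L2 G1 G2 U1 U2 a c : R) : 0 < U1 -> 0 < U2 -> 0 < a ->
  L1 * / U1 <= L2 * / U2 -> G1 * / (U1 * U1) = G2 * / (U2 * U2) ->
  - L1 + c * / U1 * G1 = a -> - L2 + c * / U2 * G2 = a -> U1 <= U2.
Proof.
move=> h1 h2 ha hL hG e1 e2.
have f1 : L1 * / U1 = c * (G1 * / (U1 * U1)) - a * / U1.
  have -> : L1 = c * / U1 * G1 - a by lra. field; lra.
have f2 : L2 * / U2 = c * (G2 * / (U2 * U2)) - a * / U2.
  have -> : L2 = c * / U2 * G2 - a by lra. field; lra.
rewrite f1 f2 hG in hL.
have hh : a * / U2 <= a * / U1 by lra.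
apply: Rnot_lt_le => hlt.
have : / U1 < / U2 by apply: Rinv_lt_contravar => //; nra.
nra.
Qed.

Lemma ctsK_addc N (K : pt N -> Prop) f x e : ctsK K f x -> ctsK K (fun y => f y + e) x.
Proof.
move=> h ep ep0; have [d [d0 Hd]] := h ep ep0; exists d; split => // y Ky hy.
have -> : f x + e - (f y + e) = f x - f y by ring. exact: Hd.
Qed.

Lemma half N (Om : pt N -> Prop) alpha eps (a c u1 u2 : pt N -> R) :
  is_open Om -> (exists x, Om x) -> is_bounded Om -> 0 < alpha -> 0 < eps ->
  (forall x, Om x -> 0 < a x) ->
  is_solution Om alpha eps a c u1 -> is_solution Om alpha eps a c u2 ->
  forall x, rclosure Om x -> u1 x <= u2 x.
Proof.
move=> hop [x1 Ox1] [M HM] hal he hapos.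
move=> [Hh1 [Du1 [D2u1 [[P1 [P21 _]] [E1 [Pos1 B1]]]]]].
move=> [Hh2 [Du2 [D2u2 [[P2 [P22 _]] [E2 [Pos2 B2]]]]]].
have OmK : forall x, Om x -> rclosure Om x.
  move=> x Ox r r0; exists x; split => //; rewrite /rball rdist_refl //.
have nn1 : forall x, rclosure Om x -> 0 < u1 x + eps.
  move=> x Kx; case: (Classical_Prop.classic (Om x)) => Ox; first by have := Pos1 x Ox; lra.
  rewrite B1; [lra | by split].
have nn2 : forall x, rclosure Om x -> 0 < u2 x + eps.
  move=> x Kx; case: (Classical_Prop.classic (Om x)) => Ox; first by have := Pos2 x Ox; lra.
  rewrite B2; [lra | by split].
pose w := fun x => sln (u1 x + eps) - sln (u2 x + eps).
have hN := pos_INR N.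
have [x0 [Kx0 Hmax]] : exists x0, rclosure Om x0 /\ forall x, rclosure Om x -> w x <= w x0.
  apply: (evt_bridge N (rclosure Om) w).
  - by exists x1; apply: OmK.
  - exists (M + 1) => x Kx i.
    have [y [Oy hy]] := Kx 1 Rlt_0_1.
    have h1 := rdist_coord x y i.
    have h2 := rdist_coord (fun _ => 0) y i.
    have h3 := HM y Oy.
    rewrite /rball in hy.
    have := Rabs_triang (x i - y i) (y i).
    have -> : x i - y i + y i = x i by ring.
    have : Rabs (y i) = Rabs (0 - y i) by rewrite Rminus_0_l Rabs_Ropp.
    lra.
  - move=> x hx r r0.
    have d0 : 0 < r / (INR N + 1) / 2 by apply: Rdiv_lt_0_compat; [apply: Rdiv_lt_0_compat|]; lra.
    have [z [Kz hz]] := hx _ d0.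
    have [y [Oy hy]] := Kz _ d0.
    exists y; split => //; rewrite /rball; apply: rdist_small => // i.
    have := hz i; have := rdist_coord z y i; rewrite /rball in hy.
    have := Rabs_triang (x i - z i) (z i - y i).
    have -> : x i - z i + (z i - y i) = x i - y i by ring.
    lra.
  - move=> x Kx.
    apply: ctsK_minus.
      apply: ctsK_ln => //.
      apply: ctsK_addc; exact: holder_ctsK hal Hh1 x Kx.
    apply: ctsK_ln => //.
    apply: ctsK_addc; exact: holder_ctsK hal Hh2 x Kx.
have w0 : w x0 <= 0.
  apply: Rnot_lt_le => wpos.
  case: (Classical_Prop.classic (Om x0)) => Ox0; last first.
    have bd : rboundary Om x0 by split.
    by move: wpos; rewrite /w (B1 _ bd) (B2 _ bd) Rminus_diag; lra.
  have U1p := nn1 _ Kx0; have U2p := nn2 _ Kx0.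
  have U21 : u2 x0 + eps < u1 x0 + eps.
    apply: ln_lt_inv => //; rewrite /w in wpos; lra.
  have [r [r0 Hr]] := hop x0 Ox0.
  have Sb : forall i t, Rabs t < r -> Om (dshift x0 i t).
    move=> i t ht; apply: Hr; rewrite /rball rdist_shift //.
  have Hi : forall i, D2u1 i i x0 * / (u1 x0 + eps) <= D2u2 i i x0 * / (u2 x0 + eps) /\
      Du1 i x0 * Du1 i x0 * / ((u1 x0 + eps) * (u1 x0 + eps)) =
      Du2 i x0 * Du2 i x0 * / ((u2 x0 + eps) * (u2 x0 + eps)).
    move=> i.
    have d1 := line_deriv (fun y Oy => P1 i y Oy) (Sb i).
    have d2 := line_deriv (fun y Oy => P2 i y Oy) (Sb i).
    have l1 := ln_line (fun t ht => nn1 _ (OmK _ (Sb i t ht))) d1.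
    have l2 := ln_line (fun t ht => nn2 _ (OmK _ (Sb i t ht))) d2.
    have d10 := d1 0 ltac:(rewrite Rabs_R0 //).
    have d20 := d2 0 ltac:(rewrite Rabs_R0 //).
    rewrite shift0 in d10 d20.
    have ne1 : u1 (dshift x0 i 0) + eps <> 0 by rewrite shift0; lra.
    have ne2 : u2 (dshift x0 i 0) + eps <> 0 by rewrite shift0; lra.
    have q1 := quot0 (P21 i i x0 Ox0) d10 ne1.
    have q2 := quot0 (P22 i i x0 Ox0) d20 ne2.
    rewrite !shift0 in q1 q2.
    have := one_d r0 (fun t ht => derivable_pt_lim_minus _ _ _ _ _ (l1 t ht) (l2 t ht))
       (derivable_pt_lim_minus _ _ _ _ _ q1 q2) _.
    case.
      move=> t ht; rewrite /minus_fct /= shift0.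
      exact: (Hmax _ (OmK _ (Sb i t ht))).
    rewrite /= !shift0 => g0 lle.
    apply: key_i => //; lra.
  have S1 : laplacian_sum D2u1 x0 * / (u1 x0 + eps) <= laplacian_sum D2u2 x0 * / (u2 x0 + eps).
    rewrite /laplacian_sum -!sumR_scale; apply: sumR_le => j; exact: (Hi j).1.
  have S2 : grad_sq Du1 x0 * / ((u1 x0 + eps) * (u1 x0 + eps)) =
            grad_sq Du2 x0 * / ((u2 x0 + eps) * (u2 x0 + eps)).
    rewrite /grad_sq -!sumR_scale; apply: sumR_ext => j; exact: (Hi j).2.
  have := final_alg U1p U2p (hapos x0 Ox0) S1 S2 (E1 x0 Ox0) (E2 x0 Ox0).
  lra.
move=> x Kx.
have := Hmax x Kx.
have U1p := nn1 _ Kx; have U2p := nn2 _ Kx.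
rewrite /w => hw.
apply: Rnot_lt_le => hlt.
have : sln (u2 x + eps) < sln (u1 x + eps) by apply: ln_increasing => //; lra.
rewrite /w in w0; lra.
Qed.

Theorem mainTheorem4 (N : nat) (Om : pt N -> Prop) (alpha eps : R) (a c : pt N -> R)
  (hOm : is_domain Om) (hbd : is_bounded Om) (hreg : C2alpha_boundary Om alpha)
  (halpha : 0 < alpha < 1)
  (ha : holder_on (rclosure Om) alpha a) (hc : holder_on (rclosure Om) alpha c)
  (hapos : forall x, rclosure Om x -> 0 < a x) (hcpos : forall x, rclosure Om x -> 0 < c x)
  (heps : 0 < eps < 1)
  (u1 u2 : pt N -> R)
  (h1 : is_solution Om alpha eps a c u1) (h2 : is_solution Om alpha eps a c u2) :
  forall x, rclosure Om x -> u1 x = u2 x.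
Proof.
move: hOm => [hop [hne _]].
have hap : forall x, Om x -> 0 < a x.
  move=> x Ox; apply: hapos => r r0; exists x; split => //; rewrite /rball rdist_refl //.
move=> x Kx; apply: Rle_antisym.
  exact: (half hop hne hbd (proj1 halpha) (proj1 heps) hap h1 h2).
exact: (half hop hne hbd (proj1 halpha) (proj1 heps) hap h2 h1).
Qed.
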